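(* Let $A$ be a Type I$_k$ weight matrix with $V_A$ faithful, and consider the Hilbert map $\Pi:V_A\to\mathbb R^\ell\times\mathbb C^{k^2}\times\mathbb C^N$, $\boldsymbol z\mapsto\big((r_i(\boldsymbol z))_i,(p_{i,j}(\boldsymbol z))_{i,j},(q_{\boldsymbol s}(\boldsymbol z))_{\boldsymbol s}\big)$, $N=\binom{\alpha+k-1}{k-1}$ (whose real and imaginary parts form a real Hilbert basis). Then $\Pi(Z_A)$ equals the set of tuples $(r_i,p_{i,j},q_{\boldsymbol s})$ such that $p_{i,j}=\overline{p_{j,i}}$ for all $i,j$, the relations (1)–(6) of Proposition 4.2 hold (with $R_i,P_{i,j},Q_{\boldsymbol s},\overline Q_{\boldsymbol s}$ evaluated at $r_i,p_{i,j},q_{\boldsymbol s},\overline{q_{\boldsymbol s}}$, the latter being the complex conjugate of $q_{\boldsymbol s}$), the moment map relations $-a_ir_i+n_i\sum_{j=1}^kp_{j,j}=0$ hold for $i=1,\dots,\ell$, and the inequalities $r_i\ge0$ ($1\le i\le\ell$) and $p_{j,j}\ge0$ ($1\le j\le k$) hold.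
   Context: Type I$_k$: $A=[D,\boldsymbol n,\dots,\boldsymbol n]\in\mathbb Z^{\ell\times(\ell+k)}$ with $D=\operatorname{diag}(-a_1,\dots,-a_\ell)$, $a_i>0$, $\boldsymbol n=(n_1,\dots,n_\ell)^T$, $n_i>0$; $V_A=\mathbb C^{\ell+k}$ with $\mathbb T^\ell$ acting by $z_j\mapsto\prod_it_i^{a_{ij}}z_j$, faithful = effective; shell $Z_A$ = common zero set of $\tfrac12\sum_ja_{ij}z_j\overline{z_j}$. $\alpha=\operatorname{lcm}(a_i)$, $m_i=n_i\alpha/a_i$. Invariants $r_i=z_i\overline{z_i}$, $p_{i,j}=z_{\ell+i}\overline{z_{\ell+j}}$, $q_{\boldsymbol s}=\prod_{i\le\ell}z_i^{m_i}\prod_{i\le k}z_{\ell+i}^{s_i}$ ($\boldsymbol s\in\mathbb Z^k_{\ge0}$, $\sum s_i=\alpha$). Relations of Proposition 4.2: (1) $P_{g,h}P_{i,j}-P_{g,j}P_{i,h}$; (2) $P_{g,h}Q_{\boldsymbol s}-P_{i,h}Q_{\boldsymbol s'}$ with $s'_g=s_g+1$, $s'_i=s_i-1$, other entries equal; (3) $P_{g,h}\overline Q_{\boldsymbol s}-P_{g,i}\overline Q_{\boldsymbol s'}$ with $s'_h=s_h+1$, $s'_i=s_i-1$, other entries equal; (4) $Q_{\boldsymbol s}Q_{\boldsymbol s'}-Q_{\boldsymbol t}Q_{\boldsymbol t'}$ and (5) $\overline Q_{\boldsymbol s}\overline Q_{\boldsymbol s'}-\overline Q_{\boldsymbol t}\overline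 Q_{\boldsymbol t'}$ whenever $\boldsymbol s+\boldsymbol s'=\boldsymbol t+\boldsymbol t'$; (6) $\prod_iR_i^{m_i}\prod_{j=1}^\alpha P_{g_j,h_j}-Q_{\boldsymbol s}\overline Q_{\boldsymbol s'}$, where $g$ appears $s_g$ times among the $g_j$ and $h$ appears $s'_h$ times among the $h_j$. *)

(* Defs.v *)
(* The complex numbers are modelled by an arbitrary
   numClosedFieldType C (e.g. algC). *)
From HB Require Import structures.
From mathcomp Require Import all_boot all_order all_algebra.
Set Implicit Arguments. Unset Strict Implicit. Unset Printing Implicit Defensive.
Import Order.TTheory GRing.Theory Num.Theory.
Local Open Scope ring_scope.

Definition typeI_matrix (l k : nat) (a n : 'I_l -> nat) : 'M[int]_(l, l + k) :=
  \matrix_(i < l, j < l + k)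
    match split j with
    | inl j' => if i == j' then - (a i)%:Z else 0
    | inr _ => (n i)%:Z
    end.

(* Faithfulness of the torus action z_j |-> (prod_i t_i^(a_ij)) z_j of
   T^l = {t : |t_i| = 1} on V_A = C^(l+k): only t = 1 acts trivially. *)
Definition faithful_rep (C : numClosedFieldType) (l m : nat) (A : 'M[int]_(l, m)) : Prop :=
  forall t : 'I_l -> C, (forall i, `|t i| = 1) ->
    (forall j : 'I_m, \prod_(i < l) (t i) ^ (A i j) = 1) ->
    forall i, t i = 1.

Definition shell (C : numClosedFieldType) (l m : nat) (A : 'M[int]_(l, m))
  (z : 'I_m -> C) : Prop :=
  forall i : 'I_l, 2^-1 * \sum_(j < m) (A i j)%:~R * (z j * (z j)^*) = 0.

Definition alphaA (l : nat) (a : 'I_l -> nat) : nat := \big[lcmn/1%N]_(i < l) a i.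
Definition mA (l : nat) (a n : 'I_l -> nat) (i : 'I_l) : nat :=
  (n i * alphaA a %/ a i)%N.

Definition rinv (C : numClosedFieldType) (l k : nat) (z : 'I_(l + k) -> C)
  (i : 'I_l) : C := z (lshift k i) * (z (lshift k i))^*.
Definition pinv (C : numClosedFieldType) (l k : nat) (z : 'I_(l + k) -> C)
  (i j : 'I_k) : C := z (rshift l i) * (z (rshift l j))^*.
Definition qinv (C : numClosedFieldType) (l k : nat) (a n : 'I_l -> nat)
  (z : 'I_(l + k) -> C) (s : 'I_k -> nat) : C :=
  (\prod_(i < l) z (lshift k i) ^+ mA a n i) * \prod_(i < k) z (rshift l i) ^+ s i.

Definition admissible (l k : nat) (a : 'I_l -> nat) (s : 'I_k -> nat) : Prop :=
  (\sum_(i < k) s i)%N = alphaA a.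

(* Main.v *)
Require Import Defs.
From HB Require Import structures.
From mathcomp Require Import all_boot all_order all_algebra.
Import Order.TTheory GRing.Theory Num.Theory.
Local Open Scope ring_scope.

From mathcomp Require Import ring zify.
Set Implicit Arguments. Unset Strict Implicit. Unset Printing Implicit Defensive.

Lemma card_nth (T : eqType) (x0 x : T) (sq : seq T) :
  #|[pred j : 'I_(size sq) | nth x0 sq j == x]| = count (pred1 x) sq.
Proof.
rewrite -sum1_count (big_nth x0) big_mkord -sum1_card.
by apply: eq_bigl => j; rewrite inE.
Qed.

Lemma exists_gs (k N : nat) (s : 'I_k -> nat) :
  (\sum_(i < k) s i)%N = N ->
  exists gs : 'I_N -> 'I_k, forall x, s x = #|[pred j | gs j == x]|.
Proof.
case: k s => [|k] s.
  rewrite big_ord0 => <-; exists id => x; case: x => //.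
set sq := flatten [seq nseq (s x) x | x <- enum 'I_k.+1].
have Hsz : size sq = (\sum_(i < k.+1) s i)%N.
  rewrite size_flatten /shape -map_comp sumnE big_map big_enum /=.
  by apply: eq_bigr => i _; rewrite /= size_nseq.
move=> HN; subst N; rewrite -Hsz.
exists (fun j => nth ord0 sq j) => x.
rewrite card_nth count_flatten -map_comp sumnE big_map big_enum /=.
rewrite (bigD1 x) //= count_nseq /= eqxx mul1n big1 ?addn0 //.
by move=> i Hi; rewrite count_nseq /= (negbTE Hi).
Qed.

Lemma prod_part (R : comNzRingType) (k N : nat) (F : 'I_k -> R) (gs : 'I_N -> 'I_k) :
  \prod_(j < N) F (gs j) = \prod_(x < k) F x ^+ #|[pred j | gs j == x]|.
Proof.
rewrite (partition_big gs predT) //; apply: eq_bigr => x _.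
rewrite -prodr_const; apply: eq_big => [j|j /andP[_ /eqP->]] //.
Qed.

Lemma split_l (l k : nat) (i : 'I_l) : split (lshift k i) = inl i.
Proof. exact: (@unsplitK l k (inl i)). Qed.
Lemma split_r (l k : nat) (i : 'I_k) : split (rshift l i) = inr i.
Proof. exact: (@unsplitK l k (inr i)). Qed.

Lemma shell_eval (C : numClosedFieldType) (l k : nat) (a n : 'I_l -> nat)
  (z : 'I_(l + k) -> C) :
  shell (typeI_matrix k a n) z <->
  forall i, - (a i)%:R * rinv z i + (n i)%:R * (\sum_(j < k) pinv z j j) = 0.
Proof.
have E : forall i, \sum_(j < l + k) ((typeI_matrix k a n) i j)%:~R * (z j * (z j)^*)
   = - (a i)%:R * rinv z i + (n i)%:R * (\sum_(j < k) pinv z j j).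
  move=> i; rewrite big_split_ord /=; congr (_ + _).
    rewrite (bigD1 i) //= big1 ?addr0.
      by rewrite mxE split_l eqxx rmorphN.
    by move=> j Hj; rewrite mxE split_l eq_sym (negbTE Hj) mulr0z mul0r.
  rewrite mulr_sumr; apply: eq_bigr => j _.
  by rewrite mxE split_r.
split=> H i; have := H i; rewrite ?E //.
  by move/eqP; rewrite mulf_eq0 invr_eq0 pnatr_eq0 /= => /eqP.
by move=> ->; rewrite mulr0.
Qed.


Definition W (C : numClosedFieldType) (k : nat) (w : 'I_k -> C) (s : 'I_k -> nat) :=
  \prod_(x < k) w x ^+ s x.

Lemma W_add (C : numClosedFieldType) k (w : 'I_k -> C) s t :
  W w s * W w t = W w (fun x => (s x + t x)%N).
Proof. by rewrite /W -big_split; apply: eq_bigr => x _; rewrite exprD. Qed.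

Lemma W_ext (C : numClosedFieldType) k (w : 'I_k -> C) s t :
  (forall x, s x = t x) -> W w s = W w t.
Proof. by move=> H; apply: eq_bigr => x _; rewrite H. Qed.

Lemma W_unit (C : numClosedFieldType) k (w : 'I_k -> C) g :
  W w (fun x => (x == g) : nat) = w g.
Proof.
rewrite /W (bigD1 g) //= eqxx expr1 big1 ?mulr1 // => x Hx.
by rewrite (negbTE Hx) expr0.
Qed.

Lemma W_conj (C : numClosedFieldType) k (w : 'I_k -> C) s :
  (W w s)^* = W (fun x => (w x)^*) s.
Proof. by rewrite /W rmorph_prod; apply: eq_bigr => x _; rewrite rmorphXn. Qed.

Lemma W_scale (C : numClosedFieldType) k (w : 'I_k -> C) c s :
  W (fun x => c * w x) s = c ^+ (\sum_(x < k) s x)%N * W w s.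
Proof.
by rewrite /W -prodrXr -big_split; apply: eq_bigr => x _; rewrite exprMn.
Qed.

Lemma W_part (C : numClosedFieldType) k N (w : 'I_k -> C) (gs : 'I_N -> 'I_k) s :
  (forall x, s x = #|[pred j | gs j == x]|) -> \prod_(j < N) w (gs j) = W w s.
Proof. by move=> H; rewrite prod_part; apply: W_ext => x; rewrite H. Qed.

Lemma W_shift (C : numClosedFieldType) k (w : 'I_k -> C) (g i : 'I_k) (s s' : 'I_k -> nat) :
  s' g = (s g).+1 -> s i = (s' i).+1 ->
  (forall x, x != g -> x != i -> s' x = s x) ->
  w g * W w s = w i * W w s'.
Proof.
move=> H1 H2 H3; rewrite -W_unit -[w i]W_unit !W_add; apply: W_ext => x /=.
case: (eqVneq x g) => [->|xg].
  case: (eqVneq g i) => [E|gi] /=; first by move: H1 H2; rewrite -E; lia.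
  by rewrite H1; lia.
case: (eqVneq x i) => [->|xi] /=; first by rewrite H2; lia.
by rewrite H3.
Qed.

Lemma qinvE (C : numClosedFieldType) (l k : nat) (a n : 'I_l -> nat) (z : 'I_(l + k) -> C) s :
  qinv a n z s = (\prod_(i < l) z (lshift k i) ^+ mA a n i) * W (fun x => z (rshift l x)) s.
Proof. by []. Qed.

Lemma forward (C : numClosedFieldType) (l k : nat) (a n : 'I_l -> nat)
  (z : 'I_(l + k) -> C) (rr : 'I_l -> C) (pp : 'I_k -> 'I_k -> C) (qq : ('I_k -> nat) -> C) :
      shell (typeI_matrix k a n) z ->
      (forall i, rr i = rinv z i) ->
      (forall i j, pp i j = pinv z i j) ->
      (forall s, admissible a s -> qq s = qinv a n z s) ->
  ( (forall i j, pp i j = (pp j i)^*) /\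
      (forall g h i j, pp g h * pp i j - pp g j * pp i h = 0) /\
      (forall (g h i : 'I_k) (s s' : 'I_k -> nat), admissible a s -> admissible a s' ->
        s' g = (s g).+1 -> s i = (s' i).+1 ->
        (forall x, x != g -> x != i -> s' x = s x) ->
        pp g h * qq s - pp i h * qq s' = 0) /\
      (forall (g h i : 'I_k) (s s' : 'I_k -> nat), admissible a s -> admissible a s' ->
        s' h = (s h).+1 -> s i = (s' i).+1 ->
        (forall x, x != h -> x != i -> s' x = s x) ->
        pp g h * (qq s)^* - pp g i * (qq s')^* = 0) /\
      (forall s s' t t' : 'I_k -> nat,
        admissible a s -> admissible a s' -> admissible a t -> admissible a t' ->
        (forall x, (s x + s' x = t x + t' x)%N) ->
        qq s * qq s' - qq t * qq t' = 0 /\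
        (qq s)^* * (qq s')^* - (qq t)^* * (qq t')^* = 0) /\
      (forall (gs hs : 'I_(alphaA a) -> 'I_k) (s s' : 'I_k -> nat),
        admissible a s -> admissible a s' ->
        (forall x, s x = #|[pred j | gs j == x]|) ->
        (forall x, s' x = #|[pred j | hs j == x]|) ->
        (\prod_(i < l) rr i ^+ mA a n i) * (\prod_(j < alphaA a) pp (gs j) (hs j))
          - qq s * (qq s')^* = 0) /\
      (forall i, - (a i)%:R * rr i + (n i)%:R * (\sum_(j < k) pp j j) = 0) /\
      (forall i, 0 <= rr i) /\ (forall j, 0 <= pp j j)).
Proof.
move=> Hsh Hr Hp Hq.
set w := fun x => z (rshift l x).
set Z := \prod_(i < l) z (lshift k i) ^+ mA a n i.
have Hp' : forall i j, pp i j = w i * (w j)^* by move=> i j; rewrite Hp.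
have Hq' : forall s, admissible a s -> qq s = Z * W w s by move=> s /Hq ->.
have E4 : forall s s' t t' : 'I_k -> nat,
        admissible a s -> admissible a s' -> admissible a t -> admissible a t' ->
        (forall x, (s x + s' x = t x + t' x)%N) ->
        qq s * qq s' - qq t * qq t' = 0.
  move=> s s' t t' As As' At At' H.
  rewrite !Hq' // mulrACA [Z * W w t * _]mulrACA !W_add (W_ext _ H).
  by rewrite subrr.
split; first by move=> i j; rewrite !Hp'; rewrite rmorphM /= conjCK mulrC.
split; first by move=> g h i j; rewrite !Hp'; ring.
split.
  move=> g h i s s' As As' H1 H2 H3; rewrite !Hp' !Hq' //.
  have := W_shift w H1 H2 H3 => E.
  transitivity ((w h)^* * Z * (w g * W w s - w i * W w s')); first by ring.
  by rewrite E subrr mulr0.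
split.
  move=> g h i s s' As As' H1 H2 H3; rewrite !Hp' !Hq' // !rmorphM /=.
  have E : (w h)^* * (W w s)^* = (w i)^* * (W w s')^*.
    by rewrite !W_conj; exact: (W_shift (fun x => (w x)^*) H1 H2 H3).
  transitivity (w g * Z^* * ((w h)^* * (W w s)^* - (w i)^* * (W w s')^*)); first by ring.
  by rewrite E subrr mulr0.
split.
  move=> s s' t t' As As' At At' H; split; first exact: E4.
  by rewrite -!rmorphM -rmorphB E4 // rmorph0.
split.
  move=> gs hs s s' As As' Hg Hh.
  under eq_bigr do rewrite Hr.
  under [X in _ * X]eq_bigr do rewrite Hp'.
  rewrite big_split /= (W_part w Hg) (W_part (fun x => (w x)^*) Hh) -W_conj.
  rewrite !Hq' // rmorphM.
  have -> : \prod_(i < l) rinv z i ^+ mA a n i = Z * Z^*.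
    by rewrite /Z rmorph_prod -big_split; apply: eq_bigr => i _; rewrite rmorphXn exprMn.
  by ring.
split.
  move=> i; rewrite Hr (eq_bigr _ (fun j _ => Hp j j)).
  by move: Hsh => /shell_eval; apply.
split; first by move=> i; rewrite Hr mul_conjC_ge0.
by move=> j; rewrite Hp mul_conjC_ge0.
Qed.

Lemma cM (C : numClosedFieldType) (x y : C) : (x * y)^* = x^* * y^*.
Proof. exact: rmorphM. Qed.
Lemma cV (C : numClosedFieldType) (x : C) : (x^-1)^* = (x^*)^-1.
Proof. exact: fmorphV. Qed.

Definition mkz (C : numClosedFieldType) (l k : nat) (c : 'I_l -> C) (w : 'I_k -> C) :
  'I_(l + k) -> C := fun x => match split x with inl i => c i | inr j => w j end.

Lemma mkz_l (C : numClosedFieldType) (l k : nat) (c : 'I_l -> C) (w : 'I_k -> C) i :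
  mkz c w (lshift k i) = c i.
Proof. by rewrite /mkz split_l. Qed.
Lemma mkz_r (C : numClosedFieldType) (l k : nat) (c : 'I_l -> C) (w : 'I_k -> C) i :
  mkz c w (rshift l i) = w i.
Proof. by rewrite /mkz split_r. Qed.

Lemma alpha_gt0 (l : nat) (a : 'I_l -> nat) : (forall i, 0 < a i)%N -> (0 < alphaA a)%N.
Proof.
move=> H; rewrite /alphaA; apply: (big_ind (fun x => 0 < x)%N) => //.
by move=> x y Hx Hy; rewrite lcmn_gt0 Hx Hy.
Qed.

Lemma backward (C : numClosedFieldType) (l k : nat) (a n : 'I_l -> nat)
  (a_pos : forall i, (0 < a i)%N) (n_pos : forall i, (0 < n i)%N)
  (rr : 'I_l -> C) (pp : 'I_k -> 'I_k -> C) (qq : ('I_k -> nat) -> C) :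
      (forall i j, pp i j = (pp j i)^*) ->
      (forall g h i j, pp g h * pp i j - pp g j * pp i h = 0) ->
      (forall (gs hs : 'I_(alphaA a) -> 'I_k) (s s' : 'I_k -> nat),
        admissible a s -> admissible a s' ->
        (forall x, s x = #|[pred j | gs j == x]|) ->
        (forall x, s' x = #|[pred j | hs j == x]|) ->
        (\prod_(i < l) rr i ^+ mA a n i) * (\prod_(j < alphaA a) pp (gs j) (hs j))
          - qq s * (qq s')^* = 0) ->
      (forall i, - (a i)%:R * rr i + (n i)%:R * (\sum_(j < k) pp j j) = 0) ->
      (forall i, 0 <= rr i) -> (forall j, 0 <= pp j j) ->
  (exists z : 'I_(l + k) -> C,
      shell (typeI_matrix k a n) z /\
      (forall i, rr i = rinv z i) /\
      (forall i j, pp i j = pinv z i j) /\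
      (forall s, admissible a s -> qq s = qinv a n z s)).
Proof.
move=> H0 H1 H6 Hm Hr Hp.
have alpha_pos := alpha_gt0 a_pos.
have an0 : forall i, (a i)%:R != 0 :> C by move=> i; rewrite pnatr_eq0 -lt0n.
have nn0 : forall i, (n i)%:R != 0 :> C by move=> i; rewrite pnatr_eq0 -lt0n.
have H6' : forall s s', admissible a s -> admissible a s' ->
   exists gs hs : 'I_(alphaA a) -> 'I_k,
   (\prod_(i < l) rr i ^+ mA a n i) * (\prod_(j < alphaA a) pp (gs j) (hs j)) = qq s * (qq s')^*.
  move=> s s' As As'.
  have [gs Hg] := exists_gs As; have [hs Hh] := exists_gs As'.
  by exists gs, hs; apply/eqP; rewrite -subr_eq0; apply/eqP; apply: H6.
case: (eqVneq (\sum_(j < k) pp j j) 0) => [S0|S0].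
  have pjj : forall j, pp j j = 0.
    by move=> j; apply: (psumr_eq0P (fun j _ => Hp j) S0).
  have p0 : forall i j, pp i j = 0.
    move=> i j; apply/eqP; rewrite -mul_conjC_eq0 -H0; apply/eqP.
    by have := H1 i j j i; rewrite !pjj mulr0 subr0.
  have r0 : forall i, rr i = 0.
    move=> i; have := Hm i; rewrite S0 mulr0 addr0 mulNr => /eqP.
    by rewrite oppr_eq0 mulf_eq0 (negbTE (an0 i)) /= => /eqP.
  exists (mkz (fun _ => 0) (fun _ => 0)); split.
    apply/shell_eval => i; rewrite /rinv /pinv mkz_l mul0r mulr0 big1 ?mulr0 ?addr0 //.
    by move=> j _; rewrite mkz_r mul0r.
  split; first by move=> i; rewrite /rinv mkz_l mul0r.
  split; first by move=> i j; rewrite /pinv !mkz_r mul0r.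
  move=> s As; have [gs [hs E]] := H6' s s As As.
  rewrite qinvE.
  have -> : W (fun x => mkz (fun=> 0 : C) (fun=> 0) (rshift l x)) s = 0.
    rewrite /W (eq_bigr (fun x => 0 ^+ s x)) => [|x _]; last by rewrite mkz_r.
    by rewrite prodrXr As expr0n /= eqn0Ngt alpha_pos.
  rewrite mulr0; apply/eqP; rewrite -mul_conjC_eq0 -E.
  rewrite [X in _ * X](eq_bigr (fun _ => 0)) => [|j _]; last exact: p0.
  by rewrite prodr_const card_ord expr0n eqn0Ngt alpha_pos mulr0.
have [j0 Hj0] : exists j0, pp j0 j0 != 0.
  case: (pickP (fun j => pp j j != 0)) => [j0 Hj0|Hall]; first by exists j0.
  by move: S0; rewrite big1 ?eqxx // => j _; move: (Hall j) => /negbFE/eqP.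
set d := pp j0 j0.
have d_gt0 : 0 < d by rewrite lt_def Hj0 Hp.
set sg := sqrtC d.
have sg_n0 : sg != 0 by rewrite sqrtC_eq0.
have sg_c : sg^* = sg by apply: geC0_conj; rewrite sqrtC_ge0 Hp.
have sg2 : sg * sg = d by rewrite -expr2 sqrtCK.
pose w := fun j => pp j j0 / sg.
have ww : forall i j, w i * (w j)^* = pp i j.
  move=> i j; rewrite /w cM cV sg_c -H0 mulrACA -invfM sg2.
  have E : pp i j0 * pp j0 j = pp i j * d.
    by apply/eqP; rewrite eq_sym -subr_eq0 H1.
  by rewrite E mulfK.
pose c := fun i => sqrtC (rr i).
have cc : forall i, c i * (c i)^* = rr i.
  by move=> i; rewrite geC0_conj ?sqrtC_ge0 // -expr2 sqrtCK.
have rr_n0 : forall i, rr i != 0.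
  move=> i; apply/eqP => E; have := Hm i; rewrite E mulr0 add0r => /eqP.
  by rewrite mulf_eq0 (negbTE (nn0 i)) (negbTE S0).
pose Zc := \prod_(i < l) c i ^+ mA a n i.
have Zc_n0 : Zc != 0.
  rewrite /Zc; apply/prodf_neq0 => i _; apply: expf_neq0.
  by rewrite sqrtC_eq0 rr_n0.
have ZZ : Zc * Zc^* = \prod_(i < l) rr i ^+ mA a n i.
  rewrite /Zc rmorph_prod -big_split; apply: eq_bigr => i _ /=.
  by rewrite rmorphXn -exprMn cc.
have K : forall s s', admissible a s -> admissible a s' ->
    qq s * (qq s')^* = (Zc * W w s) * (Zc * W w s')^*.
  move=> s s' As As'.
  have [gs Hg] := exists_gs As; have [hs Hh] := exists_gs As'.
  have := H6 gs hs s s' As As' Hg Hh => /eqP; rewrite subr_eq0 => /eqP <-.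
  rewrite [X in _ * X](eq_bigr (fun j => w (gs j) * (w (hs j))^*)) => [|j _]; last by rewrite ww.
  rewrite big_split /= (W_part w Hg) (W_part (fun x => (w x)^*) Hh) -W_conj -ZZ cM.
  by ring.
pose s0 := fun x => if x == j0 then alphaA a else 0%N.
have As0 : admissible a s0.
  rewrite /admissible (bigD1 j0) //= /s0 eqxx big1 ?addn0 // => x /negbTE ->.
  by [].
have Ws0 : W w s0 = w j0 ^+ alphaA a.
  rewrite /W (bigD1 j0) //= /s0 eqxx big1 ?mulr1 // => x /negbTE ->.
  by rewrite expr0.
have wj0 : w j0 != 0 by rewrite /w mulf_neq0 // invr_neq0.
pose q0 := Zc * W w s0.
have q0_n0 : q0 != 0 by rewrite /q0 Ws0 mulf_neq0 // expf_neq0.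
have K0 := K s0 s0 As0 As0.
have qs0_n0 : qq s0 != 0.
  by rewrite -mul_conjC_eq0 K0 mul_conjC_eq0.
have cqs0_n0 : (qq s0)^* != 0 by rewrite conjC_eq0.
pose lam := qq s0 / q0.
have Hq : forall s, admissible a s -> qq s = lam * (Zc * W w s).
  move=> s As; apply: (mulIf cqs0_n0); rewrite K //.
  transitivity ((Zc * W w s) * (qq s0 * (qq s0)^*) / q0); last first.
    by rewrite /lam; field.
  by rewrite K0 -/q0; field.
have lamc : lam * lam^* = 1.
  rewrite /lam cM cV mulrACA -invfM K0 -/q0 divff //.
  by rewrite mulf_neq0 // conjC_eq0.
have mu_pos := alpha_pos.
pose mu := (alphaA a).-root lam.
have muK : mu ^+ alphaA a = lam by rewrite /mu rootCK.
have muc : mu * mu^* = 1.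
  have nl : `|lam| = 1.
    apply/eqP; rewrite -(@pexpr_eq1 _ _ 2) // normCK lamc //.
  have nm : `|mu| = 1.
    by apply/eqP; rewrite -(pexpr_eq1 alpha_pos) // -normrX muK nl.
  by rewrite -normCK nm expr1n.
exists (mkz c (fun j => mu * w j)).
have Hr' : forall i, rinv (mkz c (fun j => mu * w j)) i = rr i.
  by move=> i; rewrite /rinv mkz_l cc.
have Hp' : forall i j, pinv (mkz c (fun j => mu * w j)) i j = pp i j.
  move=> i j; rewrite /pinv !mkz_r cM.
  transitivity (mu * mu^* * (w i * (w j)^*)); first by ring.
  by rewrite muc mul1r ww.
split.
  apply/shell_eval => i; rewrite Hr' (eq_bigr _ (fun j _ => Hp' j j)); exact: Hm.
split; first by move=> i; rewrite Hr'.
split; first by move=> i j; rewrite Hp'.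
move=> s As; rewrite qinvE.
have -> : W (fun x => mkz c (fun j => mu * w j) (rshift l x)) s = W (fun x => mu * w x) s.
  by apply: eq_bigr => x _; rewrite mkz_r.
rewrite (eq_bigr (fun i => c i ^+ mA a n i)) => [|i _]; last by rewrite mkz_l.
rewrite W_scale As muK Hq // -/Zc.
by ring.
Qed.

Unset Implicit Arguments.
Set Strict Implicit.

Theorem proposition4p4 (C : numClosedFieldType) (l k : nat) (a n : 'I_l -> nat)
  (a_pos : forall i, (0 < a i)%N) (n_pos : forall i, (0 < n i)%N)
  (faithful : faithful_rep C (typeI_matrix k a n))
  (rr : 'I_l -> C) (pp : 'I_k -> 'I_k -> C) (qq : ('I_k -> nat) -> C) :
  (exists z : 'I_(l + k) -> C,
      shell (typeI_matrix k a n) z /\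
      (forall i, rr i = rinv z i) /\
      (forall i j, pp i j = pinv z i j) /\
      (forall s, admissible a s -> qq s = qinv a n z s))
  <->
  ( (* hermitian *)
      (forall i j, pp i j = (pp j i)^*) /\
      (* (1) *)
      (forall g h i j, pp g h * pp i j - pp g j * pp i h = 0) /\
      (* (2) *)
      (forall (g h i : 'I_k) (s s' : 'I_k -> nat), admissible a s -> admissible a s' ->
        s' g = (s g).+1 -> s i = (s' i).+1 ->
        (forall x, x != g -> x != i -> s' x = s x) ->
        pp g h * qq s - pp i h * qq s' = 0) /\
      (* (3) *)
      (forall (g h i : 'I_k) (s s' : 'I_k -> nat), admissible a s -> admissible a s' ->
        s' h = (s h).+1 -> s i = (s' i).+1 ->
        (forall x, x != h -> x != i -> s' x = s x) ->
        pp g h * (qq s)^* - pp g i * (qq s')^* = 0) /\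
      (* (4) and (5) *)
      (forall s s' t t' : 'I_k -> nat,
        admissible a s -> admissible a s' -> admissible a t -> admissible a t' ->
        (forall x, (s x + s' x = t x + t' x)%N) ->
        qq s * qq s' - qq t * qq t' = 0 /\
        (qq s)^* * (qq s')^* - (qq t)^* * (qq t')^* = 0) /\
      (* (6) *)
      (forall (gs hs : 'I_(alphaA a) -> 'I_k) (s s' : 'I_k -> nat),
        admissible a s -> admissible a s' ->
        (forall x, s x = #|[pred j | gs j == x]|) ->
        (forall x, s' x = #|[pred j | hs j == x]|) ->
        (\prod_(i < l) rr i ^+ mA a n i) * (\prod_(j < alphaA a) pp (gs j) (hs j))
          - qq s * (qq s')^* = 0) /\
      (* moment map relations *)
      (forall i, - (a i)%:R * rr i + (n i)%:R * (\sum_(j < k) pp j j) = 0) /\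
      (* inequalities *)
      (forall i, 0 <= rr i) /\ (forall j, 0 <= pp j j)).
Proof.
split.
  by case=> z [Hsh [Hr [Hp Hq]]]; exact: (@forward C l k a n z rr pp qq Hsh Hr Hp Hq).
case=> H0 [H1 [_ [_ [_ [H6 [Hm [Hr Hp]]]]]]].
exact: (@backward C l k a n a_pos n_pos rr pp qq H0 H1 H6 Hm Hr Hp).
Qed.
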